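(* For every $m\ge1$ and $n\ge1$ there is an injective map from $Q_5(m,n)$ to $P_5(-m,n)$.
   Context: Partitions: $\lambda_1\ge\cdots\ge\lambda_\ell>0$, $\ell(\lambda)=\ell$, $\lambda_i=0$ for $i>\ell$, $s(\lambda)$ the smallest part with $s(\emptyset)=+\infty$. Rank $=\lambda_1-\ell$; rank-set $=[-\lambda_1,1-\lambda_2,\dots,\ell-1-\lambda_\ell,\ell,\ell+1,\dots]$. $Q(m,n)$: partitions of $n$ whose rank-set contains $m$; $P(-m,n)$: partitions of $n$ with rank $\ge-m$. $m$-Durfee rectangle symbol $(\alpha,\beta)_{(m+j)\times j}$ of $\lambda$: $j\ge0$ is the largest integer with $\lambda_{m+j}\ge j$; $\alpha$ is the conjugate of $(\lambda_1-j,\dots,\lambda_{m+j}-j)$ and $\beta=(\lambda_{m+j+1},\lambda_{m+j+2},\dots)$; $|\lambda|=|\alpha|+|\beta|+j(m+j)$. $Q_5(m,n)$ is the set of $\lambda\in Q(m,n)$ whose symbol has $j\ge1$, $\ell(\beta)-\ell(\alpha)\ge1$, $\alpha_1=\alpha_2=m+j>\alpha_3$ and $s(\beta)\ge2$. $P_5(-m,n)$ is the set of $\mu\in P(-m,n)$ whose symbol $(\gamma,\delta)_{(m+j')\times j'}$ has $j'\ge1$, $\ell(\gamma)=\ell(\delta)$, $\gamma_1\le m+j'-3$ and $\delta_1=j'$. *)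

(* Defs.v *)
From mathcomp Require Import all_boot all_order all_algebra.
Set Implicit Arguments. Unset Strict Implicit. Unset Printing Implicit Defensive.
Import GRing.Theory Num.Theory.

Definition is_partition (l : seq nat) : bool :=
  sorted geq l && all (fun x => 0 < x) l.

Definition partition_of (n : nat) (l : seq nat) : bool :=
  is_partition l && (sumn l == n).

(* λ_i, 1-indexed, with λ_i = 0 for i > ℓ (and for i = 0, unused). *)
Definition part (l : seq nat) (i : nat) : nat := nth 0 l i.-1.

Definition rank (l : seq nat) : int := (Posz (part l 1) - Posz (size l))%R.

Definition in_rankset (m : int) (l : seq nat) : bool :=
  (has (fun i => (Posz i - Posz (part l i.+1) == m)%R) (iota 0 (size l)))
  || (Posz (size l) <= m)%R.

Definition inQ (m : int) (n : nat) (l : seq nat) : bool :=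
  partition_of n l && in_rankset m l.
Definition inP_neg (m : int) (n : nat) (l : seq nat) : bool :=
  partition_of n l && (- m <= rank l)%R.

Definition conj_part (s : seq nat) : seq nat :=
  mkseq (fun k => count (fun x => k < x) s) (\max_(x <- s) x).

(* Any such j satisfies j <= ℓ
   (for j >= 1, λ_{m+j} >= j > 0 forces m+j <= ℓ), so the bounded max
   below is the largest such j. *)
Definition durfee_j (m : nat) (l : seq nat) : nat :=
  \max_(0 <= j < (size l).+1 | j <= part l (m + j)) j.

Definition durfee_alpha (m : nat) (l : seq nat) : seq nat :=
  let j := durfee_j m l in conj_part [seq x - j | x <- take (m + j) l].

Definition durfee_beta (m : nat) (l : seq nat) : seq nat :=
  drop (m + durfee_j m l) l.

(* "s(β) >= k" where s(β) is the smallest part and s(∅) = +∞ *)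
Definition smallest_part_ge (k : nat) (b : seq nat) : bool :=
  all (fun x => k <= x) b.

Definition inQ5 (m n : nat) (l : seq nat) : bool :=
  let j := durfee_j m l in
  let a := durfee_alpha m l in
  let b := durfee_beta m l in
  [&& inQ (Posz m) n l,
      1 <= j,
      (size a).+1 <= size b,
      part a 1 == m + j,
      part a 2 == m + j,
      part a 3 < m + j &
      smallest_part_ge 2 b].

Definition inP5 (m n : nat) (mu : seq nat) : bool :=
  let j := durfee_j m mu in
  let g := durfee_alpha m mu in
  let d := durfee_beta m mu in
  [&& inP_neg (Posz m) n mu,
      1 <= j,
      size g == size d,
      part g 1 + 3 <= m + j &
      part d 1 == j].

(* Main.v *)
Require Import Defs.
From mathcomp Require Import all_boot all_order all_algebra.
From mathcomp Require Import zify.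
Set Implicit Arguments. Unset Strict Implicit. Unset Printing Implicit Defensive.

Lemma geq_trans' : transitive geq.
Proof. by move=> a b c H1 H2; apply: leq_trans H2 H1. Qed.

Lemma sorted_nth_le (s : seq nat) i k :
  sorted geq s -> i <= k -> nth 0 s k <= nth 0 s i.
Proof.
elim: s i k => [|x s IH] i k /= Hs Hik; first by rewrite !nth_nil.
have Hall := order_path_min geq_trans' Hs.
case: i Hik => [|i] Hik; case: k Hik => [|k] Hik //=.
  case: (ltnP k (size s)) => Hk.
    by move/allP: Hall; apply; apply: mem_nth.
  by rewrite nth_default.
by apply: IH => //; apply: path_sorted Hs.
Qed.

Lemma sorted_of_nth (s : seq nat) :
  (forall i, i.+1 < size s -> nth 0 s i.+1 <= nth 0 s i) -> sorted geq s.
Proof.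
elim: s => [|x [|y t] IH] //= H.
apply/andP; split; first by have := H 0 isT.
by apply: IH => i Hi; apply: (H i.+1).
Qed.

Lemma sum_ltn_ord n x : \sum_(k < n) (k < x) = minn x n.
Proof.
elim: n => [|n IH]; first by rewrite big_ord0; lia.
rewrite big_ord_recr /= IH.
case: (ltnP n x) => H; lia.
Qed.

Lemma sum_count_le (s : seq nat) n :
  (forall x, x \in s -> x <= n) ->
  \sum_(k < n) count (fun x => k < x) s = sumn s.
Proof.
elim: s => [|x s IH] H /=; first by rewrite big1.
rewrite big_split /= sum_ltn_ord IH; last by move=> y Hy; apply: H; rewrite inE Hy orbT.
have := H x (mem_head _ _); lia.
Qed.

Lemma max_ge (s : seq nat) x : x \in s -> x <= \max_(y <- s) y.
Proof. by move=> Hx; apply: (@leq_bigmax_seq _ s predT (fun y => y) x Hx). Qed.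

Lemma size_conj s : size (conj_part s) = \max_(y <- s) y.
Proof. by rewrite /conj_part size_mkseq. Qed.

Lemma nth_conj s k : nth 0 (conj_part s) k = count (fun x => k < x) s.
Proof.
rewrite /conj_part; case: (ltnP k (\max_(y <- s) y)) => Hk.
  by rewrite nth_mkseq.
rewrite nth_default ?size_mkseq //.
apply/esym/eqP; rewrite -leqn0 leqNgt -has_count; apply/hasPn => x Hx.
by rewrite -leqNgt; apply: leq_trans (max_ge Hx) Hk.
Qed.

Lemma sorted_conj s : sorted geq (conj_part s).
Proof.
apply: sorted_of_nth => i _; rewrite !nth_conj.
by apply: sub_count => x /= H; apply: ltnW.
Qed.

Lemma conj_pos s : all (fun x => 0 < x) (conj_part s).
Proof.
apply/allP => x /(nthP 0) [k]; rewrite size_conj => Hk <-.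
rewrite nth_conj lt0n; apply/negP => /eqP H.
have : \max_(y <- s) y <= k.
  apply/bigmax_leqP_seq => y Hy _.
  move/eqP: H; rewrite -leqn0 leqNgt -has_count => /hasPn/(_ y Hy).
  by rewrite -leqNgt.
by rewrite leqNgt Hk.
Qed.

Lemma sumn_mkseq (f : nat -> nat) n : sumn (mkseq f n) = \sum_(k < n) f k.
Proof. rewrite sumnE big_map; have -> : iota 0 n = index_iota 0 n by rewrite /index_iota subn0. by rewrite big_mkord. Qed.

Lemma sumn_conj s : sumn (conj_part s) = sumn s.
Proof.
rewrite /conj_part sumn_mkseq sum_count_le //.
by move=> x Hx; apply: max_ge.
Qed.

Lemma head_ge (x : nat) t z : sorted geq (x :: t) -> z \in t -> z <= x.
Proof. by move=> /= H Hz; have /allP := order_path_min geq_trans' H; apply. Qed.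

Lemma sorted_count_eq (s1 s2 : seq nat) : sorted geq s1 -> sorted geq s2 ->
  (forall c, count (fun x => c <= x) s1 = count (fun x => c <= x) s2) -> s1 = s2.
Proof.
elim: s1 s2 => [|x t IH] [|y u] // H1 H2 Hc.
- by have := Hc 0; rewrite /= add1n.
- by have := Hc 0; rewrite /= add1n.
have Hxy : x = y.
  apply/eqP; rewrite eqn_leq; apply/andP; split.
    case: (leqP x y) => // Hlt.
    have := Hc x; rewrite /= leqnn.
    have -> : count (fun z => x <= z) u = 0.
      apply/eqP; rewrite -leqn0 leqNgt -has_count; apply/hasPn => z Hz.
      have := head_ge H2 Hz; lia.
    by rewrite (leqNgt x y) Hlt.
  case: (leqP y x) => // Hlt.
  have := Hc y; rewrite /= leqnn.
  have -> : count (fun z => y <= z) t = 0.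
    apply/eqP; rewrite -leqn0 leqNgt -has_count; apply/hasPn => z Hz.
    have := head_ge H1 Hz; lia.
  by rewrite (leqNgt y x) Hlt.
subst y; congr (_ :: _); apply: IH.
- exact: path_sorted H1.
- exact: path_sorted H2.
move=> c; apply/eqP; rewrite -(eqn_add2l (c <= x)); apply/eqP; exact: Hc c.
Qed.

Lemma conj_inj c1 c2 : sorted geq c1 -> sorted geq c2 -> size c1 = size c2 ->
  conj_part c1 = conj_part c2 -> c1 = c2.
Proof.
move=> H1 H2 Hs Hc; apply: sorted_count_eq => // [[|c]].
  by rewrite !(eq_count (a2 := predT)) // !count_predT.
by have := congr1 (fun s => nth 0 s c) Hc; rewrite /= !nth_conj.
Qed.

Lemma durfee_max m l j' : durfee_j m l < j' -> j' <= size l -> part l (m + j') < j'.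
Proof.
move=> Hlt Hs; rewrite ltnNge; apply/negP => Hc.
have : j' <= durfee_j m l.
  rewrite /durfee_j.
  apply: (@leq_bigmax_seq _ (index_iota 0 (size l).+1) (fun j => j <= part l (m + j)) (fun j => j) j') => //.
  by rewrite mem_index_iota ltnS Hs.
by rewrite leqNgt Hlt.
Qed.

Lemma durfee_ge m l j' : j' <= size l -> j' <= part l (m + j') -> j' <= durfee_j m l.
Proof.
move=> Hs Hc; rewrite /durfee_j.
apply: (@leq_bigmax_seq _ (index_iota 0 (size l).+1) (fun j => j <= part l (m + j)) (fun j => j) j') => //.
by rewrite mem_index_iota ltnS Hs.
Qed.

Lemma durfee_le m l k : (forall j', k < j' -> j' <= size l -> part l (m + j') < j') ->
  durfee_j m l <= k.
Proof.
move=> H; rewrite /durfee_j; apply/bigmax_leqP_seq => j'.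
rewrite mem_index_iota ltnS => /andP[_ Hs] Hc.
case: (leqP j' k) => // Hlt.
by have := H j' Hlt Hs; rewrite ltnNge Hc.
Qed.

Lemma part_le l i k : sorted geq l -> 0 < i -> i <= k -> part l k <= part l i.
Proof. by move=> Hs Hi Hik; rewrite /part; apply: sorted_nth_le => //; lia. Qed.

Lemma Q5_facts m n l : 1 <= m -> inQ5 m n l ->
  let j := durfee_j m l in let M := m + j in let b := drop M l in
  sorted geq l /\ sumn l = n /\ M < size l /\
      (forall i, 0 < i <= M -> j.+2 <= part l i) /\
      part l M = j.+2 /\ part l M.+1 = j /\
      all (fun x => 2 <= x <= j) b /\
      part l 1 - j + 1 <= size b /\ 2 <= j.
Proof.
move=> hm /andP[HQ /andP[Hj /andP[Hsz /andP[Ha1 /andP[Ha2 /andP[Ha3 Hb]]]]]] j M b.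
move: HQ => /andP[/andP[/andP[Hsort Hpos] /eqP Hsum] Hrk].
rewrite /durfee_alpha /durfee_beta -/j -/M -/b in Hsz Ha2 Ha3 Hb.
rewrite /part /= !nth_conj !count_map in Ha2 Ha3.
have Hsb : 0 < size b by lia.
have HsM : M < size l by move: Hsb; rewrite /b size_drop; lia.
have Htk : size (take M l) = M by rewrite size_take HsM.
have Hall : all (preim (subn^~ j) (fun x => 1 < x)) (take M l).
  by rewrite all_count Htk.
have Hge : forall i, 0 < i <= M -> j.+2 <= part l i.
  move=> i /andP[Hi0 HiM]; rewrite /part.
  have Hi : i.-1 < M by lia.
  have Hin : nth 0 (take M l) i.-1 \in take M l by apply: mem_nth; rewrite Htk.
  have := allP Hall _ Hin.
  by rewrite nth_take //= => H; lia.
have HM : part l M = j.+2.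
  apply/eqP; rewrite eqn_leq Hge ?andbT; last by lia.
  rewrite leqNgt; apply/negP => Hgt.
  have : all (preim (subn^~ j) (fun x => 2 < x)) (take M l).
    apply/allP => x /(nthP 0) [k Hk <-].
    rewrite /= nth_take; last by rewrite -Htk.
    have : part l M <= nth 0 l k.
      rewrite /part; apply: sorted_nth_le => //; rewrite Htk in Hk; lia.
    lia.
  rewrite all_count Htk => /eqP; lia.
have HM1 : part l M.+1 <= j.
  case: (leqP j.+1 (size l)) => Hs.
    by have := durfee_max (ltnSn j) Hs; rewrite /M -addnS; lia.
  by rewrite /part nth_default //=; lia.
have HM1' : part l M.+1 = j.
  move: Hrk; rewrite /in_rankset => /orP[]; last first.
    by rewrite lez_nat; lia.
  case/hasP => i; rewrite mem_iota add0n => /andP[_ Hi] /eqP Heq.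
  have Heq' : i = part l i.+1 + m by lia.
  case: (ltnP i M) => HiM.
    have Hi1 : 0 < i.+1 <= M by lia.
    have := Hge i.+1 Hi1; lia.
  have : part l i.+1 <= part l M.+1 by apply: part_le; lia.
  move=> Hle.
  have HiM' : i = M by lia.
  by rewrite HiM' in Heq'; lia.
have Hbb : all (fun x => 2 <= x <= j) b.
  apply/allP => x Hx; rewrite (allP Hb x Hx) /=.
  move: Hx => /(nthP 0) [k Hk <-]; rewrite /b nth_drop.
  have : nth 0 l (M + k) <= part l M.+1 by rewrite /part; apply: sorted_nth_le => //; lia.
  by move=> H; apply: leq_trans H HM1.
have Hsa : part l 1 - j <= \max_(y <- [seq x - j | x <- take M l]) y.
  apply: max_ge; apply/mapP; exists (part l 1) => //.
  rewrite /part /= -(@nth_take M _ 0 0); last by lia.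
  by apply: mem_nth; rewrite Htk; lia.
rewrite size_conj in Hsz.
have Hj2 : 2 <= j.
  have := allP Hbb (nth 0 b 0) (mem_nth 0 Hsb).
  rewrite /b nth_drop addn0 => H; rewrite /part /= in HM1'; rewrite HM1' in H; lia.
do 8 (split => //). lia.
Qed.


Lemma sorted_cat_geq (s1 s2 : seq nat) : sorted geq s1 -> sorted geq s2 ->
  nth 0 s2 0 <= last 0 s1 -> 0 < size s1 -> sorted geq (s1 ++ s2).
Proof.
case: s1 => [|x t] //= H1 H2 Hl _; rewrite cat_path H1 /=.
by case: s2 H2 Hl => [|y u] //= H2 Hl; rewrite H2 andbT.
Qed.

Lemma take_mkseq (l : seq nat) M : M <= size l -> take M l = mkseq (nth 0 l) M.
Proof.
move=> HM; have Hsz : size (take M l) = M.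
  by rewrite size_take; case: ltnP => // H; apply/eqP; rewrite eqn_leq HM H.
apply: (@eq_from_nth _ 0); rewrite ?size_mkseq ?Hsz //.
by move=> i Hi; rewrite nth_take ?nth_mkseq.
Qed.

Definition yv m l := part l (durfee_j m l).+1 - (durfee_j m l).+2.

Definition pi_at m l r :=
  let j := durfee_j m l in let b := drop (m + j) l in
  if r == 0 then (size b).-1 + yv m l + (m.-1)./2
  else if r <= j - 2 then count (fun x => r.+1 < x) b - 1 + yv m l
  else part l (r + 2) - j.+2.

Definition Dl m l :=
  let j := durfee_j m l in
  mkseq (fun k => part l k.+1 - part l j.+1 + 1 + (if k == 0 then nat_of_bool (odd m.-1) else 0)) j.

Definition fmap m l :=
  let j := durfee_j m l in
  mkseq (fun r => j.+1 + pi_at m l r) (m + j - 2) ++ nseq 3 j.+1 ++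
  conj_part (pi_at m l 0 :: Dl m l).

Tactic Notation "slia" := (clear; lia).
Tactic Notation "slia" hyp_list(hs) := (revert hs; clear; lia).

Lemma sum_shift1 (F : nat -> nat) a b : \sum_(a <= i < b) F i.+1 = \sum_(a.+1 <= i < b.+1) F i.
Proof. by rewrite -(addn1 a) -(addn1 b) big_addn addnK; apply: eq_big_nat => i _; rewrite addn1. Qed.

Lemma big_nat_bounds (F : nat -> nat) a a' b b' : a = a' -> b = b' ->
  \sum_(a <= i < b) F i = \sum_(a' <= i < b') F i.
Proof. by move=> -> ->. Qed.

Lemma mul_pred_add j x : 0 < j -> (j - 1) * x + x = j * x.
Proof. by case: j => // j _; rewrite subn1 /= mulSn addnC. Qed.

Lemma weight_arith (m j y s h e P1 P2 SB L0 L1 L2 D0 SD x : nat) :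
  2 <= j -> 1 <= m -> 1 <= s -> e + h.*2 = m.-1 -> x = y + j.+2 ->
  P1 + (j - 2) = SB + (j - 2) * y ->
  P2 + (m - 1) * j.+2 = L2 ->
  D0 + SD + j * x = L0 + L1 + j + e ->
  (m + j - 2) * j.+1 + ((s.-1 + y + h) + P1 + P2) + j.+1 * 3 + ((s.-1 + y + h) + (D0 + SD))
  = L0 + L1 + L2 + j.+2 + (s + s + SB).
Proof.
case: j => [|[|j]] // _; case: m => [|m] // _; case: s => [|s] // _ /=.
rewrite !subn2 !subn1 /=.
move=> Hhe -> H1 H2 H3.
nia.
Qed.

Lemma count_all_size (a : pred nat) s : all a s -> count a s = size s.
Proof. by rewrite all_count => /eqP. Qed.

Lemma fmap_P5 m n l : 1 <= m -> inQ5 m n l ->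
  inP5 m n (fmap m l) /\ durfee_j m (fmap m l) = (durfee_j m l).+1 /\
  sorted geq (pi_at m l 0 :: Dl m l).
Proof.
move=> hm HQ.
move: (Q5_facts hm HQ) => /= [Hs [Hsum [HsM [Hge [HM [HM1 [Hbb [Hsb Hj2]]]]]]]].
rewrite /fmap.
set j := durfee_j m l in HsM Hge HM HM1 Hbb Hsb Hj2 *.
set M := m + j in HsM Hge HM HM1 Hbb Hsb *.
set b := drop M l in Hbb Hsb *.
set s := size b in Hsb *.
have Hy : yv m l = part l j.+1 - j.+2 by [].
set y := yv m l in Hy *.
set h := (m.-1)./2.
set e := nat_of_bool (odd m.-1).
have Hhe : e + h.*2 = m.-1 by rewrite /e /h odd_double_half.
have Hlj1 : j.+2 <= part l j.+1 by apply: Hge; slia hm.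
have Hb0 : nth 0 b 0 = j by rewrite /b nth_drop addn0; move: HM1; rewrite /part.
have Hs1 : 0 < s by move: HsM; rewrite /s /b size_drop; slia.
have Hb0in : j \in b by rewrite -Hb0 mem_nth.
have HBpos : forall r, r <= j - 2 -> 1 <= count (fun x => r.+1 < x) b.
  move=> r Hr; rewrite -has_count; apply/hasP; exists j => //; slia Hr Hj2.
have HBle : forall r, count (fun x => r < x) b <= s by move=> r; apply: count_size.
have Hc0 : count (fun x => 0 < x) b = s.
  apply: count_all_size; apply/allP => x Hx; have := allP Hbb x Hx; slia.
have Hc1 : count (fun x => 1 < x) b = s.
  apply: count_all_size; apply/allP => x Hx; have := allP Hbb x Hx; slia.
have Hp0 : pi_at m l 0 = s.-1 + y + h by [].
have HpB : forall r, 0 < r <= j - 2 -> pi_at m l r + 1 = count (fun x => r.+1 < x) b + y.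
  move=> r /andP[Hr0 Hr]; rewrite /pi_at -/j -/M -/b -/y.
  have -> : (r == 0) = false by slia Hr0.
  rewrite Hr; have := HBpos r Hr; slia.
have HpL : forall r, j - 2 < r -> r + 2 <= M -> pi_at m l r + j.+2 = part l (r + 2).
  move=> r Hr HrM; rewrite /pi_at -/j -/M -/b -/y.
  have -> : (r == 0) = false by slia Hr Hj2.
  have -> : (r <= j - 2) = false by slia Hr.
  have Hr2 : 0 < r + 2 <= M by slia HrM.
  have := Hge (r + 2) Hr2; slia.
have HpS : forall r, r.+1 < M - 2 -> pi_at m l r.+1 <= pi_at m l r.
  move=> r Hr.
  case: (leqP r.+1 (j - 2)) => Hr1.
    have := HpB r.+1 ltac:(slia Hr1).
    case: r Hr Hr1 => [|r] Hr Hr1.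
      rewrite Hp0 => H; have := HBle 2; slia H Hs1.
    have := HpB r.+1 ltac:(slia Hr1).
    have : count (fun x => r.+3 < x) b <= count (fun x => r.+2 < x) b.
      by apply: sub_count => x /= Hx; slia Hx.
    slia.
  have := HpL r.+1 Hr1 ltac:(slia Hr).
  case: (leqP r (j - 2)) => Hr2.
    have E : r.+1 + 2 = j.+1 by slia Hr1 Hr2 Hj2.
    rewrite E => H.
    case: r Hr Hr1 Hr2 E H => [|r] Hr Hr1 Hr2 E H.
      rewrite Hp0; slia H Hy Hlj1.
    have := HpB r.+1 ltac:(slia Hr2); have := HBpos r.+1 Hr2; slia H Hy Hlj1.
  have := HpL r Hr2 ltac:(slia Hr).
  have : part l (r.+1 + 2) <= part l (r + 2) by apply: part_le => //; slia.
  slia.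
have HpLe0 : forall r, r < M - 2 -> pi_at m l r <= pi_at m l 0.
  elim=> [//|r IH] Hr; apply: leq_trans (HpS r Hr) (IH ltac:(slia Hr)).
set p0 := pi_at m l 0 in Hp0 HpLe0 HpS *.
have Hl1 : j.+2 <= part l 1 by apply: Hge; slia hm.
have Hp0pos : 0 < p0 by rewrite Hp0; have := Hsb; slia Hl1.
set D := Dl m l.
have HsD : size D = j by rewrite /D /Dl size_mkseq.
have HD0 : nth 0 D 0 + part l j.+1 = part l 1 + 1 + e.
  rewrite /D /Dl -/j nth_mkseq; last by slia Hj2.
  have : part l j.+1 <= part l 1 by apply: part_le.
  rewrite /= -/e; slia.
have HDk : forall k, 0 < k < j -> nth 0 D k + part l j.+1 = part l k.+1 + 1.
  move=> k Hk; rewrite /D /Dl -/j nth_mkseq; last by slia Hk.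
  have : part l j.+1 <= part l k.+1 by apply: part_le => //; slia Hk.
  have -> : (k == 0) = false by slia Hk.
  slia.
have HDpos : forall k, k < j -> 1 <= nth 0 D k.
  case=> [|k] Hk.
    have := HD0; have : part l j.+1 <= part l 1 by apply: part_le.
    slia.
  have := HDk k.+1 ltac:(slia Hk).
  have : part l j.+1 <= part l k.+2 by apply: part_le => //; slia Hk.
  slia.
have HDS : forall k, k.+1 < j -> nth 0 D k.+1 <= nth 0 D k.
  move=> k Hk; have := HDk k.+1 ltac:(slia Hk).
  have : part l k.+2 <= part l k.+1 by apply: part_le => //; slia.
  case: k Hk => [|k] Hk; [have := HD0 | have := HDk k.+1 ltac:(slia Hk)]; slia.
have HsortD : sorted geq D.
  by apply: sorted_of_nth => i; rewrite HsD => Hi; apply: HDS.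
have HD0p : nth 0 D 0 <= p0.
  have := HD0; rewrite Hp0 /s; have := Hsb; have : e <= 1 by rewrite /e; case: odd.
  slia Hy Hlj1.
set c := p0 :: D.
have Hsortc : sorted geq c.
  rewrite /c /= (path_sortedE geq_trans') HsortD andbT.
  apply/allP => x /(nthP 0) [k Hk <-]; apply: leq_trans HD0p; exact: sorted_nth_le.
have Hmaxc : \max_(x <- c) x = p0.
  apply/eqP; rewrite eqn_leq; apply/andP; split; last by apply: max_ge; rewrite mem_head.
  apply/bigmax_leqP_seq => x; rewrite inE => /orP[/eqP -> //|] /(nthP 0) [k Hk <-] _.
  apply: leq_trans HD0p; apply: sorted_nth_le => //.
have Hcposall : all (fun x => 0 < x) c.
  rewrite /= Hp0pos /=; apply/allP => x /(nthP 0) [k]; rewrite HsD => Hk <-; exact: HDpos.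
have Hcc0 : count (fun x => 0 < x) c = j.+1 by rewrite count_all_size //= HsD.
set A := mkseq (fun r => j.+1 + pi_at m l r) (M - 2).
set C := conj_part c.
set nu := A ++ nseq 3 j.+1 ++ C.
have HsC : size C = p0 by rewrite /C size_conj Hmaxc.
have HM3 : 3 <= M by slia hm Hj2.
have Hsnu : size nu = M + 1 + p0.
  by rewrite /nu !size_cat size_mkseq size_nseq HsC; slia HM3.
have Hnth : forall r, nth 0 nu r = if r < M - 2 then j.+1 + pi_at m l r
    else if r < M + 1 then j.+1 else count (fun x => r - (M + 1) < x) c.
  move=> r; rewrite /nu nth_cat size_mkseq; case: ltnP => H1; first by rewrite nth_mkseq.
  rewrite nth_cat size_nseq; case: ltnP => H2.
    rewrite nth_nseq H2; have -> : r < M + 1 by slia H2 HM3.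
    done.
  have -> : (r < M + 1) = false by slia H2 HM3.
  by rewrite /C nth_conj; have -> : r - (M - 2) - 3 = r - (M + 1) by slia HM3.
have Hsortnu : sorted geq nu.
  apply: sorted_of_nth => i Hi; rewrite !Hnth.
  case: ifP => H1.
    have -> : i < M - 2 by slia H1.
    by rewrite leq_add2l; apply: HpS.
  case: ifP => H2.
    case: ifP => H3; first by slia.
    case: ifP => H4; first by slia.
    by slia H2 H4.
  case: ifP => H3; first by slia H2 H3.
  case: ifP => H4.
    have -> : i.+1 - (M + 1) = 0 by slia H2 H4.
    by rewrite Hcc0.
  by apply: sub_count => x /=; slia.
have Hposnu : all (fun x => 0 < x) nu.
  rewrite /nu !all_cat conj_pos andbT; apply/andP; split.
    by apply/allP => x /mapP [r _ ->].
  by apply/allP => x /nseqP [->].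
have Hnu0 : nth 0 nu 0 = j.+1 + p0.
  rewrite Hnth; have -> : 0 < M - 2 by slia HM3.
  done.
have HnuM1 : nth 0 nu (M + 1) = j.+1.
  rewrite Hnth ltnn; have -> : (M + 1 < M - 2) = false by slia.
  by rewrite subnn.
have Hdur : durfee_j m nu = j.+1.
  apply/eqP; rewrite eqn_leq; apply/andP; split.
    apply: durfee_le => j' Hj' Hs'.
    rewrite /part; have : nth 0 nu (m + j').-1 <= nth 0 nu (M + 1).
      by apply: sorted_nth_le => //; slia Hj'.
    slia HnuM1 Hj'.
  apply: durfee_ge; first by slia Hsnu.
  rewrite /part Hnth; have -> : ((m + j.+1).-1 < M - 2) = false by slia.
  by have -> : (m + j.+1).-1 < M + 1 by slia.
have Hsum_nu : sumn nu = n.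
  have HsA : sumn A = (M - 2) * j.+1 + \sum_(0 <= r < M - 2) pi_at m l r.
    by rewrite /A sumn_mkseq big_split /= sum_nat_const card_ord big_mkord mulnC.
  have Hsplit : \sum_(0 <= r < M - 2) pi_at m l r = p0 +
      \sum_(1 <= r < j - 1) pi_at m l r + \sum_(j - 1 <= r < M - 2) pi_at m l r.
    rewrite (big_cat_nat _ (n := 1)) //=; last by slia HM3.
    rewrite big_nat1 (big_cat_nat _ (n := j - 1) (m := 1)) /=; try slia hm Hj2.
  have Ha : \sum_(1 <= r < j - 1) pi_at m l r + (j - 2) =
      \sum_(1 <= r < j - 1) count (fun x => r.+1 < x) b + (j - 2) * y.
    have : \sum_(1 <= r < j - 1) (pi_at m l r + 1) =
        \sum_(1 <= r < j - 1) (count (fun x => r.+1 < x) b + y).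
      apply: eq_big_nat => r Hr; apply: HpB; slia Hr.
    rewrite !big_split /= !sum_nat_const_nat.
    have -> : j - 1 - 1 = j - 2 by slia.
    by rewrite muln1.
  have Hb' : \sum_(j - 1 <= r < M - 2) pi_at m l r + (m - 1) * j.+2 =
      \sum_(j <= i < M - 1) nth 0 l i.
    have : \sum_(j - 1 <= r < M - 2) (pi_at m l r + j.+2) =
        \sum_(j - 1 <= r < M - 2) nth 0 l r.+1.
      apply: eq_big_nat => r Hr; rewrite HpL; try slia Hr Hj2.
      by rewrite /part addn2.
    rewrite big_split /= sum_nat_const_nat.
    have -> : M - 2 - (j - 1) = m - 1 by slia Hj2 hm.
    move=> ->.
    rewrite (sum_shift1 (nth 0 l)).
    by apply: big_nat_bounds; [slia Hj2 | slia HM3].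
  have HsD' : sumn D = \sum_(0 <= k < j) nth 0 D k.
    by rewrite -{1}(mkseq_nth 0 D) HsD sumn_mkseq big_mkord.
  have Hj0 : 0 < j by slia Hj2.
  have Hc : nth 0 D 0 + \sum_(1 <= k < j) nth 0 D k + j * nth 0 l j =
      nth 0 l 0 + \sum_(1 <= k < j) nth 0 l k + j + e.
    have : \sum_(1 <= k < j) (nth 0 D k + part l j.+1) = \sum_(1 <= k < j) (nth 0 l k + 1).
      by apply: eq_big_nat => k Hk; rewrite HDk.
    rewrite !big_split /= !sum_nat_const_nat /part /= => H.
    have := HD0; rewrite /part /= => H0.
    have := mul_pred_add (nth 0 l j) Hj0.
    move: H H0 Hj0; clear; lia.
  have HsD2 : sumn D = nth 0 D 0 + \sum_(1 <= k < j) nth 0 D k.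
    by rewrite HsD' (big_ltn (F := fun k => nth 0 D k) Hj0).
  have HsC' : sumn C = p0 + sumn D by rewrite /C sumn_conj.
  have Hnu' : sumn nu = sumn A + j.+1 * 3 + sumn C.
    by rewrite /nu !sumn_cat sumn_nseq addnA.
  have Hl' : sumn l = sumn (take M l) + sumn b.
    by rewrite -{1}(cat_take_drop M l) sumn_cat.
  have Htk : sumn (take M l) = \sum_(0 <= i < M) nth 0 l i.
    by rewrite take_mkseq ?sumn_mkseq ?big_mkord // ltnW.
  have HjM : j <= M - 1 by slia hm.
  have Hsplit2 : \sum_(0 <= i < M) nth 0 l i = nth 0 l 0 + \sum_(1 <= i < j) nth 0 l i +
      \sum_(j <= i < M - 1) nth 0 l i + nth 0 l (M - 1).
    rewrite (@big_cat_nat _ _ _ (M - 1) 0 M xpredT (nth 0 l)) //; last by slia HM3.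
    rewrite (@big_cat_nat _ _ _ j 0 (M - 1) xpredT (nth 0 l)) //.
    rewrite (big_ltn (F := fun k => nth 0 l k) Hj0).
    have -> : \sum_(M - 1 <= i < M) nth 0 l i = \sum_(M - 1 <= i < (M - 1).+1) nth 0 l i.
      by apply: big_nat_bounds; slia HM3.
    by rewrite big_nat1.
  have HlM : nth 0 l (M - 1) = j.+2 by move: HM; rewrite /part subn1.
  have Hsb' : sumn b = s + s + \sum_(1 <= r < j - 1) count (fun x => r.+1 < x) b.
    rewrite -(@sum_count_le b j); last by move=> x Hx; have := allP Hbb x Hx; slia.
    rewrite -(big_mkord xpredT (fun k => count (fun x => k < x) b)).
    rewrite (big_ltn (F := fun k => count (fun x => k < x) b) Hj0).
    rewrite (big_ltn (F := fun k => count (fun x => k < x) b) Hj2).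
    rewrite Hc0 Hc1 -addnA; congr (_ + (_ + _)).
    have := sum_shift1 (fun k => count (fun x => k < x) b) 1 (j - 1); rewrite /= => ->.
    by apply: big_nat_bounds; slia Hj2.
  have Hxy : nth 0 l j = y + j.+2 by move: Hy Hlj1; rewrite /part /=; slia.
  have W := weight_arith Hj2 hm Hs1 Hhe Hxy Ha Hb' Hc.
  rewrite Hnu' HsA Hsplit HsC' HsD2 -Hsum Hl' Htk Hsplit2 HlM Hsb' Hp0.
  move: W; clear; lia.
have HnuE : nu = (A ++ nseq 3 j.+1) ++ C by rewrite /nu catA.
have HsAB : size (A ++ nseq 3 j.+1) = m + j.+1.
  by rewrite size_cat size_mkseq size_nseq; slia HM3.
split; last by split.
rewrite /inP5 /durfee_alpha /durfee_beta Hdur HnuE take_size_cat // drop_size_cat // -HnuE.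
apply/and5P; split => //.
- rewrite /inP_neg /partition_of /is_partition Hsortnu Hposnu Hsum_nu eqxx /=.
  rewrite /rank /part /= Hnu0 Hsnu; slia.
- rewrite size_conj HsC; apply/eqP/anti_leq/andP; split.
    apply/bigmax_leqP_seq => x /mapP [z]; rewrite mem_cat => /orP[].
      move=> /mapP [r]; rewrite mem_iota add0n => /andP[_ Hr] -> -> _.
      by have := HpLe0 r Hr; slia.
    by move=> /nseqP [-> _] -> _; rewrite subnn.
  apply: max_ge; apply/mapP; exists (j.+1 + p0); last by slia.
  rewrite mem_cat; apply/orP; left; apply/mapP; exists 0; rewrite ?mem_iota //.
  slia HM3.
- rewrite /part /= nth_conj count_map count_cat.
  have -> : count (preim (subn^~ j.+1) (fun x => 0 < x)) (nseq 3 j.+1) = 0.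
    by rewrite count_nseq /= subnn.
  have := count_size (preim (subn^~ j.+1) (fun x => 0 < x)) A; rewrite size_mkseq; slia HM3.
- by rewrite /part /= /C nth_conj Hcc0.
Qed.

Lemma fmap_nth_top m l r : r < m + durfee_j m l - 2 ->
  nth 0 (fmap m l) r = (durfee_j m l).+1 + pi_at m l r.
Proof. by rewrite /fmap nth_cat size_mkseq => H; rewrite H nth_mkseq. Qed.

Lemma fmap_drop m l : 2 <= m + durfee_j m l ->
  drop (m + (durfee_j m l).+1) (fmap m l) = conj_part (pi_at m l 0 :: Dl m l).
Proof.
move=> H; rewrite /fmap catA drop_size_cat // size_cat size_mkseq size_nseq; lia.
Qed.

Lemma size_Dl m l : size (Dl m l) = durfee_j m l.
Proof. by rewrite /Dl size_mkseq. Qed.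

Lemma Dl_nth m l i : 0 < i <= durfee_j m l -> nth 0 (Dl m l) i.-1 =
  part l i - part l (durfee_j m l).+1 + 1 + (if i == 1 then nat_of_bool (odd m.-1) else 0).
Proof.
move=> /andP[Hi0 Hi]; rewrite /Dl nth_mkseq; last by lia.
rewrite prednK //; congr (_ + _); case: i Hi0 Hi => [|[|i]] //.
Qed.

Lemma pi_Lv m l i : 2 <= durfee_j m l -> (durfee_j m l).+1 <= i ->
  pi_at m l (i - 2) = part l i - (durfee_j m l).+2.
Proof.
move=> Hj Hi; rewrite /pi_at.
have -> : (i - 2 == 0) = false by lia.
have -> : (i - 2 <= durfee_j m l - 2) = false by lia.
by rewrite subnK //; lia.
Qed.

Lemma pi_Bv m l c : 3 <= c <= durfee_j m l -> pi_at m l (c - 2) =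
  count (fun x => c <= x) (drop (m + durfee_j m l) l) - 1 + yv m l.
Proof.
move=> Hc; rewrite /pi_at.
have -> : (c - 2 == 0) = false by lia.
have -> : (c - 2 <= durfee_j m l - 2) by lia.
have -> : (c - 2).+1 = c.-1 by lia.
by rewrite prednK //; lia.
Qed.

Lemma count_gt_zero (s : seq nat) c : (forall x, x \in s -> x < c) ->
  count (fun x => c <= x) s = 0.
Proof.
move=> H; apply/eqP; rewrite -leqn0 leqNgt -has_count; apply/hasPn => x Hx.
by rewrite -ltnNge; apply: H.
Qed.

Lemma fmap_inj m n l1 l2 : 1 <= m -> inQ5 m n l1 -> inQ5 m n l2 ->
  fmap m l1 = fmap m l2 -> l1 = l2.
Proof.
move=> hm HQ1 HQ2 Heq.
have [_ [Hd1 Hsc1]] := fmap_P5 hm HQ1.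
have [_ [Hd2 Hsc2]] := fmap_P5 hm HQ2.
have Hj : durfee_j m l1 = durfee_j m l2 by apply: succn_inj; rewrite -Hd1 -Hd2 Heq.
move: (Q5_facts hm HQ1) (Q5_facts hm HQ2) => /=
  [Hs1 [_ [HsM1 [Hge1 [HM1 [HMa1 [Hbb1 [Hsb1 Hj21]]]]]]]]
  [Hs2 [_ [HsM2 [Hge2 [HM2 [HMa2 [Hbb2 [Hsb2 Hj22]]]]]]]].
rewrite -Hj in HsM2 Hge2 HM2 HMa2 Hbb2 Hsb2.
set j := durfee_j m l1 in Hj HsM1 Hge1 HM1 HMa1 Hbb1 Hsb1 Hj21 HsM2 Hge2 HM2 HMa2 Hbb2 Hsb2.
set M := m + j in HsM1 Hge1 HM1 HMa1 Hbb1 Hsb1 HsM2 Hge2 HM2 HMa2 Hbb2 Hsb2.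
have Htop : forall r, r < M - 2 -> pi_at m l1 r = pi_at m l2 r.
  move=> r Hr; have := congr1 (fun s => nth 0 s r) Heq => /=.
  rewrite (fmap_nth_top (l := l1)); last by slia Hr.
  rewrite (fmap_nth_top (l := l2)); last by rewrite -Hj; slia Hr.
  by rewrite -Hj => /addnI.
have Hc : pi_at m l1 0 :: Dl m l1 = pi_at m l2 0 :: Dl m l2.
  apply: conj_inj => //; first by rewrite /= !size_Dl -Hj.
  have E1 := @fmap_drop m l1 ltac:(slia Hj21).
  have E2 := @fmap_drop m l2 ltac:(rewrite -Hj; slia Hj21).
  by rewrite -Hj in E2; rewrite -E1 -E2 Heq.
case: Hc => Hp0eq HDeq.
have Hyeq : part l1 j.+1 = part l2 j.+1.
  case: (ltnP 1 m) => Hm.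
    have := Htop (j.+1 - 2) ltac:(slia Hm Hj21).
    rewrite (pi_Lv Hj21 (leqnn _)).
    have Hle2 : (durfee_j m l2).+1 <= j.+1 by rewrite -Hj.
    rewrite (pi_Lv Hj22 Hle2) -Hj -/j.
    have := Hge1 j.+1 ltac:(slia hm); have := Hge2 j.+1 ltac:(slia hm).
    slia.
  have Em : M = j.+1 by slia Hm hm.
  by rewrite -Em HM1 HM2.
have Hpart : forall i, 0 < i <= M -> part l1 i = part l2 i.
  move=> i Hi.
  case: (leqP i j) => Hij.
    have := congr1 (fun s => nth 0 s i.-1) HDeq => /=.
    rewrite (Dl_nth (l := l1)); last by slia Hi Hij.
    rewrite (Dl_nth (l := l2)); last by rewrite -Hj; slia Hi Hij.
    rewrite -Hj -Hyeq -/j.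
    have H1 : part l1 j.+1 <= part l1 i by apply: part_le => //; slia Hi Hij.
    have H2 : part l2 j.+1 <= part l2 i by apply: part_le => //; slia Hi Hij.
    case: (i == 1); slia H1 H2 Hyeq.
  case: (ltnP i M) => HiM.
    have := Htop (i - 2) ltac:(slia HiM Hij Hj21).
    rewrite (pi_Lv Hj21 Hij).
    have Hle2 : (durfee_j m l2).+1 <= i by rewrite -Hj.
    rewrite (pi_Lv Hj22 Hle2) -Hj -/j.
    have := Hge1 i ltac:(slia Hi); have := Hge2 i ltac:(slia Hi).
    slia.
  have -> : i = M by slia Hi HiM.
  by rewrite HM1 HM2.
have Htake : take M l1 = take M l2.
  rewrite (take_mkseq (ltnW HsM1)) (take_mkseq (ltnW HsM2)).
  apply: (@eq_from_nth _ 0); rewrite !size_mkseq // => k Hk.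
  rewrite !nth_mkseq //.
  by have := Hpart k.+1 ltac:(slia Hk); rewrite /part.
set b1 := drop M l1.
set b2 := drop M l2.
have Hsz1 : 0 < size b1 by rewrite /b1 size_drop; slia HsM1.
have Hsz2 : 0 < size b2 by rewrite /b2 size_drop; slia HsM2.
have Hyv : yv m l1 = yv m l2 by rewrite /yv -Hj -/j Hyeq.
have Hseq : size b1 = size b2.
  move: Hp0eq; rewrite /pi_at /= -Hj -/j -/M -/b1 -/b2 Hyv => H.
  slia H Hsz1 Hsz2.
have Hin1 : j \in b1.
  have <- : nth 0 b1 0 = j by rewrite /b1 nth_drop addn0; move: HMa1; rewrite /part.
  exact: mem_nth.
have Hin2 : j \in b2.
  have <- : nth 0 b2 0 = j by rewrite /b2 nth_drop addn0; move: HMa2; rewrite /part.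
  exact: mem_nth.
have Hcnt : forall c, count (fun x => c <= x) b1 = count (fun x => c <= x) b2.
  case=> [|[|[|c]]].
  - by rewrite !(eq_count (a2 := predT)) // !count_predT.
  - rewrite !count_all_size //; apply/allP => x Hx.
      by have := allP Hbb2 x Hx; slia.
    by have := allP Hbb1 x Hx; slia.
  - rewrite !count_all_size //; apply/allP => x Hx.
      by have := allP Hbb2 x Hx; slia.
    by have := allP Hbb1 x Hx; slia.
  case: (leqP c.+3 j) => Hcj.
    have := Htop (c.+3 - 2) ltac:(slia Hcj hm).
    have Hc3 : 3 <= c.+3 <= durfee_j m l1 by slia Hcj.
    have Hc3' : 3 <= c.+3 <= durfee_j m l2 by rewrite -Hj; slia Hcj.
    rewrite (pi_Bv Hc3) (pi_Bv Hc3') -Hj -/j -/M -/b1 -/b2 Hyv.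
    have H1 : 0 < count (fun x => c.+3 <= x) b1.
      by rewrite -has_count; apply/hasP; exists j.
    have H2 : 0 < count (fun x => c.+3 <= x) b2.
      by rewrite -has_count; apply/hasP; exists j.
    slia H1 H2.
  rewrite !count_gt_zero // => x Hx.
    by have := allP Hbb2 x Hx; slia Hcj.
  by have := allP Hbb1 x Hx; slia Hcj.
have Hb : b1 = b2.
  by apply: sorted_count_eq => //; apply: drop_sorted.
by rewrite -(cat_take_drop M l1) -(cat_take_drop M l2) Htake -/b1 -/b2 Hb.
Qed.

Theorem lemma4p6 (m n : nat) (hm : 1 <= m) (hn : 1 <= n) :
  exists f : seq nat -> seq nat,
    (forall l, inQ5 m n l -> inP5 m n (f l)) /\
    (forall l1 l2, inQ5 m n l1 -> inQ5 m n l2 -> f l1 = f l2 -> l1 = l2).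
Proof.
exists (fmap m); split.
  by move=> l Hl; have [] := fmap_P5 hm Hl.
by move=> l1 l2 H1 H2; exact: (fmap_inj hm H1 H2).
Qed.
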